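(* Let $R$ be a commutative ring with $1\neq 0$, $S\subseteq R$ a multiplicatively closed subset, and $M$ a faithful $S$-strong comultiplication $R$-module. If $N$ is a submodule of $M$ with $N\ll^{S}M$, then there exist an ideal $I$ of $R$ with $I\leq^{S}_{e}R$ and $t\in S$ such that $t(0:_{M}I)\leq N\leq (0:_{M}I)$.
   Context: All rings are commutative with $1\neq 0$ and all modules are unital. A multiplicatively closed subset (m.c.s.) $S$ of $R$ is a subset with $0\notin S$, $1\in S$, and $ss'\in S$ for all $s,s'\in S$. For an ideal $I$ of $R$, $(0:_M I)=\{m\in M: Im=0\}$; $\mathrm{Ann}_R(X)=\{r\in R: rX=0\}$; $M$ is faithful if $\mathrm{Ann}_R(M)=0$. A submodule $N\leq M$ is $S$-small in $M$ ($N\ll^{S}M$) if for every submodule $L$ of $M$ and $s\in S$, $sM\leq N+L$ implies $tM\leq L$ for some $t\in S$. $N$ is $S$-essential in $M$ ($N\leq^{S}_{e}M$) if for every submodule $L$ of $M$ with $N\cap L=0$ there is $s\in S$ with $sL=0$; for ideals this is applied to $M=R$. $M$ is an $S$-comultiplication module if for each submodule $N$ of $M$ there exist $s\in S$ and an ideal $I$ of $R$ with $s(0:_M I)\subseteq N\subseteq (0:_M I)$. $M$ satisfies the $S$-double annihilator condition ($S$-DAC) if for each ideal $I$ of $R$ there is $s\in S$ with $s\,\mathrm{Ann}_R((0:_M I))\subseteq I$. $M$ is an $S$-strong comultiplication module if it is an $S$-comultiplication module satisfying the $S$-DAC. *)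

(* Defs.v *)
From mathcomp Require Import all_boot all_algebra.
Set Implicit Arguments. Unset Strict Implicit. Unset Printing Implicit Defensive.
Import GRing.Theory.
Local Open Scope ring_scope.

(* Subsets are Prop-valued predicates (submodules/ideals may be infinite). *)
Section Defs.
Variables (R : comNzRingType) (M : lmodType R).

Definition is_submod (N : M -> Prop) : Prop :=
  [/\ N 0, (forall x y, N x -> N y -> N (x + y)) & (forall (r : R) x, N x -> N (r *: x))].

Definition is_ideal (I : R -> Prop) : Prop :=
  [/\ I 0, (forall x y, I x -> I y -> I (x + y)) & (forall r x, I x -> I (r * x))].

Definition mcs (S : R -> Prop) : Prop :=
  [/\ ~ S 0, S 1 & forall s s', S s -> S s' -> S (s * s')].

Definition colonM (I : R -> Prop) : M -> Prop :=
  fun m => forall r, I r -> r *: m = 0.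

Definition annR (X : M -> Prop) : R -> Prop :=
  fun r => forall m, X m -> r *: m = 0.

Definition faithful : Prop := forall r : R, (forall m : M, r *: m = 0) -> r = 0.

Definition S_small (S : R -> Prop) (N : M -> Prop) : Prop :=
  forall (L : M -> Prop) (s : R), is_submod L -> S s ->
    (forall m : M, exists a b, N a /\ L b /\ s *: m = a + b) ->
    exists t, S t /\ forall m : M, L (t *: m).

Definition S_comult (S : R -> Prop) : Prop :=
  forall N : M -> Prop, is_submod N ->
    exists (s : R) (I : R -> Prop), [/\ S s, is_ideal I,
      (forall m, colonM I m -> N (s *: m)) & (forall m, N m -> colonM I m)].

Definition S_DAC (S : R -> Prop) : Prop :=
  forall I : R -> Prop, is_ideal I ->
    exists s, S s /\ forall r, annR (colonM I) r -> I (s * r).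

Definition S_strong_comult (S : R -> Prop) : Prop := S_comult S /\ S_DAC S.

End Defs.

Definition S_essential_ideal (R : comNzRingType) (S : R -> Prop) (I : R -> Prop) : Prop :=
  forall J : R -> Prop, is_ideal J -> (forall x, I x -> J x -> x = 0) ->
    exists s, S s /\ forall x, J x -> s * x = 0.

(* Main.v *)
Require Import Defs.
From mathcomp Require Import all_boot all_algebra.
Import GRing.Theory.
Local Open Scope ring_scope.

Lemma colon_submod (R : comNzRingType) (M : lmodType R) (I : R -> Prop) :
  is_submod (colonM (M:=M) I).
Proof.
split.
- by move=> r _; rewrite scaler0.
- by move=> x y Hx Hy r Ir; rewrite scalerDr Hx // Hy // addr0.
- by move=> r x Hx r' Ir'; rewrite scalerA mulrC -scalerA Hx // scaler0.
Qed.

Lemma colon0 (R : comNzRingType) (M : lmodType R) (I : R -> Prop) :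
  colonM (M:=M) I 0.
Proof. by case: (@colon_submod _ M I). Qed.

Lemma colonZ (R : comNzRingType) (M : lmodType R) (I : R -> Prop) r x :
  colonM (M:=M) I x -> colonM I (r *: x).
Proof. by case: (@colon_submod _ M I) => _ _; apply. Qed.

Theorem proposition2p4 (R : comNzRingType) (M : lmodType R) (S : R -> Prop)
  (N : M -> Prop) :
  mcs S -> faithful M -> S_strong_comult M S ->
  is_submod N -> S_small S N ->
  exists (I : R -> Prop) (t : R),
    [/\ is_ideal I, S_essential_ideal S I, S t,
        (forall m : M, colonM I m -> N (t *: m)) &
        (forall m : M, N m -> colonM I m)].
Proof.
move=> [S0 S1 SM] faith [comult dac] subN small.
have [s [I [Ss idI HsI HNI]]] := comult N subN.
exists I, s; split => //.
move=> J idJ IJ0.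
pose K : M -> Prop := fun m => exists a b, colonM I a /\ colonM J b /\ m = a + b.
have subK : is_submod K.
  have [cI0 cID cIZ] := @colon_submod _ M I.
  have [cJ0 cJD cJZ] := @colon_submod _ M J.
  split.
  - by exists 0, 0; rewrite addr0.
  - move=> x y [a [b [Ha [Hb ->]]]] [a' [b' [Ha' [Hb' ->]]]].
    exists (a + a'), (b + b'); split; [exact: cID|split; [exact: cJD|by rewrite addrACA]].
  - move=> r x [a [b [Ha [Hb ->]]]]; exists (r *: a), (r *: b).
    by split; [exact: cIZ|split; [exact: cJZ|rewrite scalerDr]].
have [s1 [I' [Ss1 idI' HK1 HK2]]] := comult K subK.
have [s2 [Ss2 D2]] := dac I idI.
have [s3 [Ss3 D3]] := dac J idJ.
have [idI0 idID idIM] := idI.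
have [idJ0 idJD idJM] := idJ.
have kill : forall r, I' r -> s2 * s3 * r = 0.
  move=> r Ir; apply: IJ0.
  - rewrite -mulrA mulrCA; apply: idIM; apply: D2 => m Hm.
    have : K m by exists m, 0; rewrite addr0; (do !split) => //; exact: colon0.
    by move/HK2; apply.
  - rewrite -mulrA; apply: idJM; apply: D3 => m Hm.
    have : K m by exists 0, m; rewrite add0r; (do !split) => //; exact: colon0.
    by move/HK2; apply.
have [t [St Ht]] : exists t, S t /\ forall m : M, colonM J (t *: m).
  apply: (small (colonM J) (s * (s1 * (s2 * s3)))) => //.
  - exact: colon_submod.
  - by apply: (SM) => //; apply: (SM) => //; apply: (SM).
  - move=> m.
    have : K (s1 *: ((s2 * s3) *: m)).
      apply: HK1 => r Ir; by rewrite !scalerA (mulrC r) kill // scale0r.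
    move=> [a [b [Ha [Hb Heq]]]].
    exists (s *: a), (s *: b); split; [exact: HsI|split; [exact: colonZ|by rewrite -scalerDr -Heq !scalerA]].
exists t; split => // x Jx.
apply: faith => m.
by rewrite mulrC -scalerA; apply: Ht.
Qed.
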